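(* Let $F\colon\mathsf{Set}\to\mathsf{Set}$ be a functor and $\Lambda^F$ a set of evaluation functions $F\mathcal{V}\to\mathcal{V}$. Define, for $d_X\colon X\times X\to\mathcal{V}$ and $s,t\in FX$, \[\overline{F}(d_X)(s,t)=\bigwedge_{\mathit{ev}\in\Lambda^F}\ \bigwedge_{f\in\gamma_X(d_X)} d_\mathcal{V}(\mathit{ev}(Ff(s)),\mathit{ev}(Ff(t))).\] Then $\overline{F}$ (acting as $F$ on maps) is a functor on the category $\mathcal{V}\text{-}\mathsf{Graph}$, i.e. whenever $f\colon X\to Y$ satisfies $d_X\sqsubseteq d_Y\circ(f\times f)$ then $\overline{F}(d_X)\sqsubseteq\overline{F}(d_Y)\circ(Ff\times Ff)$. Moreover, restricted to $\mathcal{V}$-categories it is fibred: $\overline{F}(d_Y\circ(f\times f))=\overline{F}(d_Y)\circ(Ff\times Ff)$ for every function $f\colon X\to Y$ and every $\mathcal{V}$-category $d_Y$ on $Y$.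
   Context: $\mathcal{V}$ is a quantale: a complete lattice $(\mathcal{V},\sqsubseteq)$ with a commutative monoid structure $(\mathcal{V},\otimes,k)$ such that $\otimes$ preserves arbitrary joins in each argument; $d_\mathcal{V}(a,-)$ denotes the right adjoint of $a\otimes -$ (residuation). Write $\bigwedge$ for meets in the order $\sqsubseteq$. $\mathcal{V}\text{-}\mathsf{Graph}$ has objects pairs $(X,d_X)$ with $d_X\colon X\times X\to\mathcal{V}$ and morphisms non-expansive maps $f$ ($d_X\sqsubseteq d_Y\circ(f\times f)$). A $\mathcal{V}$-category is such a $d$ with $k\sqsubseteq d(x,x)$ and $d(x,y)\otimes d(y,z)\sqsubseteq d(x,z)$. $\gamma_X(d_X)=\{f\colon X\to\mathcal{V}\mid d_X(x_1,x_2)\sqsubseteq d_\mathcal{V}(f(x_1),f(x_2))\text{ for all }x_1,x_2\}$. $\overline{F}$ is the (coalgebraic) Kantorovich lifting of $F$ w.r.t. $\Lambda^F$. *)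

(* Defs.v *)
Set Implicit Arguments.
Unset Strict Implicit.

(** A (commutative) quantale: a complete lattice (given by its order and
    arbitrary joins) with a commutative monoid structure (tensor, k) whose
    tensor preserves arbitrary joins in each argument (by commutativity it
    suffices to ask it for one argument). *)
Record quantale := Quantale {
  qcar :> Type;
  qle : qcar -> qcar -> Prop;
  qle_refl : forall a, qle a a;
  qle_trans : forall a b c, qle a b -> qle b c -> qle a c;
  qle_antisym : forall a b, qle a b -> qle b a -> a = b;
  qsup : (qcar -> Prop) -> qcar;
  qsup_ub : forall (S : qcar -> Prop) a, S a -> qle a (qsup S);
  qsup_least : forall (S : qcar -> Prop) b,
      (forall a, S a -> qle a b) -> qle (qsup S) b;
  qtensor : qcar -> qcar -> qcar;
  qk : qcar;
  qtensorA : forall a b c, qtensor a (qtensor b c) = qtensor (qtensor a b) c;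
  qtensorC : forall a b, qtensor a b = qtensor b a;
  qtensor1 : forall a, qtensor qk a = a;
  qtensor_sup : forall a (S : qcar -> Prop),
      qtensor a (qsup S) = qsup (fun c => exists b, S b /\ c = qtensor a b)
}.

Section QuantaleOps.
Variable V : quantale.

Definition qinf (S : V -> Prop) : V :=
  @qsup V (fun c => forall a, S a -> qle c a).

(** Residuation d_V(a,-): right adjoint of a (x) -, i.e.
    d_V(a,b) = join of all c with a (x) c <= b. *)
Definition dV (a b : V) : V := @qsup V (fun c => qle (qtensor a c) b).

(** V-valued "distances" (objects of V-Graph are pairs (X, d_X)). *)
Definition vdist (X : Type) := X -> X -> V.

Definition dle (X : Type) (d1 d2 : vdist X) : Prop :=
  forall x y, qle (d1 x y) (d2 x y).

Definition dpull (X Y : Type) (f : X -> Y) (d : vdist Y) : vdist X :=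
  fun x y => d (f x) (f y).

Definition nonexpansive (X Y : Type) (dX : vdist X) (dY : vdist Y)
  (f : X -> Y) : Prop := dle dX (dpull f dY).

Definition Vcategory (X : Type) (d : vdist X) : Prop :=
  (forall x, qle (qk V) (d x x)) /\
  (forall x y z, qle (qtensor (d x y) (d y z)) (d x z)).

Definition gammaV (X : Type) (d : vdist X) (f : X -> V) : Prop :=
  forall x1 x2, qle (d x1 x2) (dV (f x1) (f x2)).

End QuantaleOps.

Record setFunctor := SetFunctor {
  fobj :> Type -> Type;
  fmap : forall X Y : Type, (X -> Y) -> fobj X -> fobj Y;
  fmap_id : forall X (s : fobj X), fmap (fun x : X => x) s = s;
  fmap_comp : forall X Y Z (f : X -> Y) (g : Y -> Z) (s : fobj X),
      fmap (fun x => g (f x)) s = fmap g (fmap f s)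
}.

Definition Kantorovich (V : quantale) (F : setFunctor)
  (Lambda : (F V -> V) -> Prop) (X : Type) (d : vdist V X) : vdist V (F X) :=
  fun s t => qinf (fun c => exists ev (f : X -> V),
      Lambda ev /\ gammaV d f /\
      c = dV (ev (@fmap F _ _ f s)) (ev (@fmap F _ _ f t))).

(* Main.v *)
Require Import Defs.
From Stdlib Require Import FunctionalExtensionality.

Section Aux.
Variable V : quantale.

Lemma tmono (c a b : V) : qle a b -> qle (qtensor c a) (qtensor c b).
Proof.
  intros H.
  assert (E : b = qsup (fun z => z = a \/ z = b)).
  { apply qle_antisym.
    - apply qsup_ub; auto.
    - apply qsup_least. intros z [->| ->]; auto using qle_refl. }
  rewrite E, qtensor_sup. apply qsup_ub. exists a; auto.
Qed.

Lemma dV_intro (a b c : V) : qle (qtensor a c) b -> qle c (dV a b).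
Proof. intros H; unfold dV; apply qsup_ub; auto. Qed.

Lemma dV_elim (a b c : V) : qle c (dV a b) -> qle (qtensor a c) b.
Proof.
  intros H. eapply qle_trans. apply tmono, H.
  unfold dV. rewrite qtensor_sup. apply qsup_least.
  intros z [w [Hw ->]]; auto.
Qed.

Lemma qinf_lb (S : V -> Prop) a : S a -> qle (qinf S) a.
Proof. intros H; unfold qinf; apply qsup_least; auto. Qed.

Lemma qinf_glb (S : V -> Prop) b : (forall a, S a -> qle b a) -> qle b (qinf S).
Proof. intros H; unfold qinf; apply qsup_ub; auto. Qed.
End Aux.

Theorem mainTheorem10 (V : quantale) (F : setFunctor)
  (Lambda : (F V -> V) -> Prop) :
  (forall (X Y : Type) (dX : vdist V X) (dY : vdist V Y) (f : X -> Y),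
      nonexpansive dX dY f ->
      nonexpansive (Kantorovich Lambda dX) (Kantorovich Lambda dY) (@fmap F _ _ f))
  /\
  (forall (X Y : Type) (f : X -> Y) (dY : vdist V Y),
      Vcategory dY ->
      Kantorovich Lambda (dpull f dY) = dpull (@fmap F _ _ f) (Kantorovich Lambda dY)).
Proof.
  assert (P1 : forall (X Y : Type) (dX : vdist V X) (dY : vdist V Y) (f : X -> Y),
      nonexpansive dX dY f ->
      nonexpansive (Kantorovich Lambda dX) (Kantorovich Lambda dY) (@fmap F _ _ f)).
  { intros X Y dX dY f Hf s t. unfold dpull, Kantorovich.
    apply qinf_glb. intros a [ev [g [Hev [Hg ->]]]].
    apply qinf_lb. exists ev, (fun x => g (f x)). split; [exact Hev|]. split.
    - intros x1 x2. eapply qle_trans. apply Hf. apply Hg.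
    - rewrite (fmap_comp f g s), (fmap_comp f g t). reflexivity. }
  split; [exact P1|].
  intros X Y f dY [Hrefl Htr].
  apply functional_extensionality; intro s.
  apply functional_extensionality; intro t.
  apply qle_antisym.
  - apply (P1 X Y (dpull f dY) dY f). intros x y; apply qle_refl.
  - unfold dpull at 2, Kantorovich. apply qinf_glb.
    intros a [ev [h [Hev [Hh ->]]]].
    set (g := fun y => qsup (fun c => exists x, c = qtensor (h x) (dY (f x) y))).
    assert (Hgf : forall x', g (f x') = h x').
    { intro x'. apply qle_antisym.
      - apply qsup_least. intros c [x ->]. apply dV_elim. apply Hh.
      - eapply qle_trans; [|apply qsup_ub; exists x'; reflexivity].
        apply qle_trans with (qtensor (h x') (qk V)).
        { rewrite qtensorC, qtensor1. apply qle_refl. }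
        apply tmono. apply Hrefl. }
    assert (Eg : (fun x => g (f x)) = h) by (apply functional_extensionality; exact Hgf).
    apply qinf_lb. exists ev, g. split; [exact Hev|]. split.
    + intros y y'. apply dV_intro. rewrite qtensorC. unfold g at 1.
      rewrite qtensor_sup. apply qsup_least. intros c [c' [[x ->] ->]].
      eapply qle_trans; [|apply qsup_ub; exists x; reflexivity].
      rewrite qtensorC, <- qtensorA. apply tmono. apply Htr.
    + rewrite <- (fmap_comp f g s), <- (fmap_comp f g t), Eg. reflexivity.
Qed.
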